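(* Let $N\ge 1$, let $\lambda_0,\dots,\lambda_N>0$ be positive real numbers and let $\gamma_0,\dots,\gamma_N\in\mathbb{C}$ be distinct complex numbers. Let $S\subset \mathbb{P}^1\times\mathbb{P}^1$ be the curve of bidegree $(N,N)$ defined in affine coordinates $(\eta,\zeta)$ by $$p(\eta,\zeta)=\sum_{i=0}^N \lambda_i^2\prod_{\substack{j=0\\ j\neq i}}^N(\zeta-\gamma_j)(1+\eta\bar\gamma_j)=0 .$$ Let $s$ be the global meromorphic section of the line bundle $\mathcal{O}(N+1,-N-1)$ on $\mathbb{P}^1\times\mathbb{P}^1$ given in affine coordinates by $$s(\eta,\zeta)=\frac{\prod_{i=0}^N(\zeta-\gamma_i)}{\prod_{i=0}^N(1+\eta\bar\gamma_i)} .$$ Then the restriction of $s$ to $S$ is non-vanishing, i.e. it is a holomorphic section of $\mathcal{O}(N+1,-N-1)|_S$ with no zeros (and no poles) on $S$.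
   Context: $\mathbb{P}^1\times\mathbb{P}^1$ has affine coordinates $(\eta,\zeta)$; $\mathcal{O}(a,b)$ denotes the line bundle $\pi_1^*\mathcal{O}(a)\otimes\pi_2^*\mathcal{O}(b)$, where $\pi_1$ is projection to the $\eta$-factor and $\pi_2$ to the $\zeta$-factor. The data $(\lambda_i,\gamma_i)$ are called JNR data and $S$ is the JNR spectral curve. *)

(* Defs.v *)
From HB Require Import structures.
From mathcomp Require Import all_boot all_order all_algebra.
From mathcomp Require Import complex.
From mathcomp Require Import reals.
From mathcomp Require Import mpoly.
Set Implicit Arguments. Unset Strict Implicit. Unset Printing Implicit Defensive.
Import Order.TTheory GRing.Theory Num.Theory.
Local Open Scope ring_scope.

(* The complex numbers are R[i] for R : realType (R is, up to isomorphism,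
   the field of real numbers).  Points of P^1 x P^1 are given by
   bihomogeneous coordinates v : 'I_4 -> C with
     v 0 = eta0, v 1 = eta1  (eta  = eta1/eta0 the affine coordinate),
     v 2 = zeta0, v 3 = zeta1 (zeta = zeta1/zeta0 the affine coordinate). *)
Definition ieta0 : 'I_4 := @Ordinal 4 0 isT.
Definition ieta1 : 'I_4 := @Ordinal 4 1 isT.
Definition izeta0 : 'I_4 := @Ordinal 4 2 isT.
Definition izeta1 : 'I_4 := @Ordinal 4 3 isT.

Section JNR.
Variable R : realType.
Local Notation C := (R[i]).

(* homogenised factors  (1 + eta conj(g))  and  (zeta - g) *)
Definition etaFactor (g : C) : {mpoly C[4]} :=
  'X_ieta0 + (g^*)%:MP * 'X_ieta1.
Definition zetaFactor (g : C) : {mpoly C[4]} :=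
  'X_izeta1 - g%:MP * 'X_izeta0.

Definition JNR_curve (N : nat) (lam : 'I_N.+1 -> R) (gam : 'I_N.+1 -> C)
  : {mpoly C[4]} :=
  \sum_(i < N.+1) (((lam i ^+ 2)%:C)%C)%:MP *
     \prod_(j < N.+1 | j != i) (zetaFactor (gam j) * etaFactor (gam j)).

Definition s_num (N : nat) (gam : 'I_N.+1 -> C) : {mpoly C[4]} :=
  \prod_(i < N.+1) zetaFactor (gam i).
Definition s_den (N : nat) (gam : 'I_N.+1 -> C) : {mpoly C[4]} :=
  \prod_(i < N.+1) etaFactor (gam i).

End JNR.

Definition bihomog (K : nzRingType) (a b : nat) (p : {mpoly K[4]}) : Prop :=
  forall m, m \in msupp p ->
    (m ieta0 + m ieta1 = a)%N /\ (m izeta0 + m izeta1 = b)%N.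

Definition P1xP1_point (K : nzRingType) (v : 'I_4 -> K) : Prop :=
  (v ieta0 != 0 \/ v ieta1 != 0) /\ (v izeta0 != 0 \/ v izeta1 != 0).

(* The meromorphic section  s = num/den  (num of bidegree (0,N+1), den of
   bidegree (N+1,0)) restricts to a holomorphic nowhere-vanishing section on
   the curve S = {P = 0}: at every point v of S, s coincides on S (i.e. modulo
   the equation P) with a quotient F/G of bihomogeneous forms of the right
   bidegree that are both nonzero at v, i.e.  num * G - den * F = Q * P. *)
Definition restriction_nonvanishing (K : fieldType) (N : nat)
  (P num den : {mpoly K[4]}) : Prop :=
  forall v : 'I_4 -> K, P1xP1_point v -> P.@[v] = 0 ->
    exists (F G Q : {mpoly K[4]}) (d1 d2 e1 e2 : nat),
      [/\ bihomog e1 e2 F, bihomog d1 d2 G,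
          (e1 + N.+1 = d1)%N & (d2 + N.+1 = e2)%N] /\
      [/\ num * G - den * F = Q * P,
          F.@[v] != 0 & G.@[v] != 0].

(* Main.v *)
Require Import Defs.
From HB Require Import structures.
From mathcomp Require Import all_boot all_order all_algebra.
From mathcomp Require Import complex reals mpoly.
From mathcomp Require Import zify ring.
Import Order.TTheory GRing.Theory Num.Theory.
Local Open Scope ring_scope.
Unset Implicit Arguments.

Section BH.
Variable K : comNzRingType.
Implicit Types p q : {mpoly K[4]}.

Lemma bh_eq {a b a' b' p} : bihomog a b p -> a = a' -> b = b' -> bihomog a' b' p.
Proof. by move=> h <- <-. Qed.

Lemma bh0 a b : bihomog a b (0 : {mpoly K[4]}).
Proof. by move=> m; rewrite msupp0. Qed.

Lemma bhC (c : K) : bihomog 0 0 c%:MP.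
Proof. move=> m; rewrite msuppC; case: eqP => _ //; rewrite inE => /eqP ->; by rewrite !mnm0E. Qed.

Lemma bhX (i : 'I_4) : bihomog ((i == ieta0) + (i == ieta1)) ((i == izeta0) + (i == izeta1)) ('X_i : {mpoly K[4]}).
Proof. move=> m; rewrite msuppX inE => /eqP ->; by rewrite !mnm1E. Qed.

Lemma bhD {a b p q} : bihomog a b p -> bihomog a b q -> bihomog a b (p + q).
Proof. by move=> hp hq m /msuppD_le; rewrite mem_cat => /orP [/hp|/hq]. Qed.

Lemma bhN {a b p} : bihomog a b p -> bihomog a b (- p).
Proof. by move=> hp m; rewrite (perm_mem (msuppN p)) => /hp. Qed.

Lemma bhB {a b p q} : bihomog a b p -> bihomog a b q -> bihomog a b (p - q).
Proof. by move=> hp hq; apply: bhD => //; apply: bhN. Qed.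

Lemma bhM {a b c d p q} : bihomog a b p -> bihomog c d q -> bihomog (a + c) (b + d) (p * q).
Proof.
move=> hp hq m /msuppM_le /allpairsP [[m1 m2] /= [h1 h2 ->]].
have [e1 e2] := hp _ h1; have [e3 e4] := hq _ h2.
rewrite !mnmDE; split; lia.
Qed.

Lemma bh_sum {I : finType} {A : {set I}} {a b} {f : I -> {mpoly K[4]}} :
  (forall i, i \in A -> bihomog a b (f i)) -> bihomog a b (\sum_(i in A) f i).
Proof.
move=> h; elim/big_rec: _ => [|i x iA hx]; first exact: bh0.
by apply: bhD => //; apply: h.
Qed.

Lemma bh_prod {I : finType} {A : {set I}} {a b} {f : I -> {mpoly K[4]}} :
  (forall i, i \in A -> bihomog a b (f i)) -> bihomog (a * #|A|) (b * #|A|) (\prod_(i in A) f i).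
Proof.
move=> h; elim: {A}#|A| {-2}A (erefl #|A|) h => [|n IH] A cA h.
  move/eqP: cA; rewrite cards_eq0 => /eqP ->.
  rewrite big_set0 cards0 !muln0; exact: bhC.
have [x xA] : exists x, x \in A.
  by apply/set0Pn; rewrite -card_gt0 cA.
rewrite (big_setD1 x xA) /=.
have cA' : #|A :\ x| = n by move: cA; rewrite (cardsD1 x A) xA => -[].
have hA' : forall i, i \in A :\ x -> bihomog a b (f i).
  by move=> i; rewrite in_setD1 => /andP [_ /h].
apply: (bh_eq (bhM (h x xA) (IH _ cA' hA'))); lia.
Qed.
End BH.
Arguments bh_eq {K a b a' b' p}.
Arguments bhD {K a b p q}.
Arguments bhN {K a b p}.
Arguments bhB {K a b p q}.
Arguments bhM {K a b c d p q}.
Arguments bh_sum {K I A a b f}.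
Arguments bh_prod {K I A a b f}.
Arguments bh0 {K a b}.
Arguments bhX {K} i.
Arguments bhC {K} c.

Section Main.
Variable R : realType.
Variable N : nat.
Variable lam : 'I_N.+1 -> R.
Variable gam : 'I_N.+1 -> R[i].
Hypothesis lampos : forall i, 0 < lam i.
Hypothesis ginj : injective gam.

Local Notation C := (R[i]).
Local Notation MP := {mpoly C[4]}.
Local Notation Z j := (zetaFactor (gam j)).
Local Notation E j := (etaFactor (gam j)).
Definition T j : MP := Z j * E j.
Definition cc i : MP := (((lam i ^+ 2)%:C)%C)%:MP.
Local Notation D k := ([set: 'I_N.+1] :\ k).

Lemma prod_D1 (f : 'I_N.+1 -> MP) k :
  \prod_(i < N.+1) f i = f k * \prod_(j in D k) f j.
Proof.
rewrite (bigD1 k) //; congr (_ * _); apply: eq_bigl => j.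
by rewrite in_setD1 in_setT andbT.
Qed.

Lemma prodD1 (F : 'I_N.+1 -> MP) (A : {set 'I_N.+1}) x : x \in A -> \prod_(i in A) F i = F x * \prod_(i in A :\ x) F i.
Proof. exact: big_setD1. Qed.
Lemma sumD1 (F : 'I_N.+1 -> MP) (A : {set 'I_N.+1}) x : x \in A -> \sum_(i in A) F i = F x + \sum_(i in A :\ x) F i.
Proof. exact: big_setD1. Qed.

Lemma P_set : JNR_curve lam gam = \sum_(i in [set: 'I_N.+1]) cc i * \prod_(j in D i) T j.
Proof.
rewrite /JNR_curve; apply: eq_big => [i|i _]; first by rewrite in_setT.
congr (_ * _); apply: eq_bigl => j.
by rewrite in_setD1 in_setT andbT.
Qed.

Lemma evalZ v j : (Z j).@[v] = v izeta1 - gam j * v izeta0.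
Proof. by rewrite /zetaFactor mevalB mevalM mevalC !mevalXU. Qed.
Lemma evalE v j : (E j).@[v] = v ieta0 + (gam j)^* * v ieta1.
Proof. by rewrite /etaFactor mevalD mevalM mevalC !mevalXU. Qed.
Lemma evalc v i : (cc i).@[v] != 0.
Proof.
rewrite /cc mevalC fmorph_eq0 expf_neq0 //; exact: lt0r_neq0.
Qed.

Lemma Zne v k j : P1xP1_point v -> (Z k).@[v] = 0 -> j != k -> (Z j).@[v] != 0.
Proof.
move=> [_ pz] hk jk; apply/eqP => hj.
have e : (gam k - gam j) * v izeta0 = (Z j).@[v] - (Z k).@[v].
  by rewrite !evalZ; ring.
rewrite hj hk subrr in e; move/eqP: e; rewrite mulf_eq0 subr_eq0 => /orP [/eqP/ginj ekj|/eqP z0].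
  by rewrite ekj eqxx in jk.
move: hk; rewrite evalZ z0 mulr0 subr0 => z1.
by case: pz; rewrite ?z0 ?z1 eqxx.
Qed.

Lemma Ene v m j : P1xP1_point v -> (E m).@[v] = 0 -> j != m -> (E j).@[v] != 0.
Proof.
move=> [pe _] hm jm; apply/eqP => hj.
have e : ((gam j)^* - (gam m)^*) * v ieta1 = (E j).@[v] - (E m).@[v].
  by rewrite !evalE; ring.
rewrite hj hm subrr in e; move/eqP: e; rewrite mulf_eq0 subr_eq0 => /orP [/eqP ekj|/eqP z0].
  have := can_inj conjCK ekj => /ginj ejm.
  by rewrite ejm eqxx in jm.
move: hm; rewrite evalE z0 mulr0 addr0 => z1.
by case: pe; rewrite ?z0 ?z1 eqxx.
Qed.

Lemma evalP_zero v k : (T k).@[v] = 0 ->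
  (JNR_curve lam gam).@[v] = (cc k).@[v] * \prod_(j in D k) (T j).@[v].
Proof.
move=> hk; rewrite P_set (big_setD1 k) ?in_setT //= mevalD mevalM rmorph_prod.
rewrite rmorph_sum [X in _ + X]big1 ?addr0 // => i; rewrite in_setD1 in_setT andbT => ik.
rewrite rmorphM rmorph_prod (big_setD1 k) /= ?hk ?mul0r ?mulr0 //.
by rewrite in_setD1 in_setT andbT eq_sym.
Qed.


Lemma bhZ (j : 'I_N.+1) : bihomog 0 1 (Z j).
Proof.
have h1 := bhX (K:=C) izeta1.
have h2 := bhM (bhC (K:=C) (gam j)) (bhX (K:=C) izeta0).
exact: (bhB (bh_eq h1 erefl erefl) (bh_eq h2 erefl erefl)).
Qed.
Lemma bhE j : bihomog 1 0 (E j).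
Proof.
have h1 := bhX (K:=C) ieta0.
have h2 := bhM (bhC (K:=C) ((gam j)^*)) (bhX (K:=C) ieta1).
exact: (bhD (bh_eq h1 erefl erefl) (bh_eq h2 erefl erefl)).
Qed.
Lemma bhT j : bihomog 1 1 (T j).
Proof. exact (bhM (bhZ j) (bhE j)). Qed.
Lemma bhc j : bihomog 0 0 (cc j).
Proof. exact: bhC. Qed.

Lemma cardD k : #|D k| = N.
Proof. by have := cardsD1 k [set: 'I_N.+1]; rewrite cardsT card_ord in_setT => -[]. Qed.

Lemma construct v k m : P1xP1_point v -> k != m -> (Z k).@[v] = 0 -> (E m).@[v] = 0 ->
    exists (F G Q : MP) (d1 d2 e1 e2 : nat),
      [/\ bihomog e1 e2 F, bihomog d1 d2 G,
          (e1 + N.+1 = d1)%N & (d2 + N.+1 = e2)%N] /\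
      [/\ s_num gam * G - s_den gam * F = Q * JNR_curve lam gam,
          F.@[v] != 0 & G.@[v] != 0].
Proof.
move=> pt km hZ hE.
set U := D k :\ m.
set W := \prod_(j in U) T j.
set A := \sum_(i in U) cc i * (E k * Z m * \prod_(j in U :\ i) T j).
have mDk : m \in D k by rewrite in_setD1 in_setT andbT eq_sym.
have kDm : k \in D m by rewrite in_setD1 in_setT andbT.
have Pid : JNR_curve lam gam = E m * (cc k * Z m * W) + Z k * (cc m * E k * W) + Z k * E m * A.
  rewrite P_set (sumD1 _ _ k) ?in_setT // (sumD1 _ _ m) //.
  rewrite [X in cc k * X](prodD1 _ _ m) //.
  rewrite [X in cc m * X](prodD1 _ _ k) //.
  have -> : D m :\ k = U.
    by apply/setP => j; rewrite !in_setD1 andbCA.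
  have -> : \sum_(i in U) cc i * \prod_(j in D i) T j = Z k * E m * A.
    rewrite /A mulr_sumr; apply: eq_bigr => i iU.
    have [im ik] : i != m /\ i != k.
      by move: iU; rewrite !in_setD1 in_setT !andbT => /andP [-> ->].
    have kDi : k \in D i by rewrite in_setD1 in_setT andbT eq_sym.
    have mDik : m \in D i :\ k.
      by rewrite !in_setD1 in_setT andbT eq_sym km eq_sym im.
    rewrite (prodD1 _ _ _ kDi) (prodD1 _ _ _ mDik).
    have -> : D i :\ k :\ m = U :\ i.
      apply/setP => j; rewrite !in_setD1 in_setT !andbT.
      by case: (j != i); case: (j != k); case: (j != m).
    rewrite /T; ring.
  rewrite /T /W; ring.
set NZ := \prod_(j in D k) Z j.
set DE := \prod_(j in D m) E j.
have hnum : s_num gam = Z k * NZ by rewrite /s_num (prod_D1 _ k).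
have hden : s_den gam = E m * DE by rewrite /s_den (prod_D1 _ m).
have cU : forall i, i \in U -> #|U| = (#|U :\ i|).+1.
  by move=> i iU; rewrite (cardsD1 i U) iU.
have cDk := cardD k; have cDm := cardD m.
have bhW : bihomog #|U| #|U| W.
  refine (bh_eq (bh_prod (A:=U) (fun j _ => bhT j)) _ _); lia.
exists (- (cc k * Z m * W + Z k * A) * NZ), (cc m * E k * W * DE), (NZ * DE).
exists (#|U| + 1 + N)%N, #|U|, #|U|, (#|U| + 1 + N)%N.
split.
  split; try lia.
  - have bhA : bihomog #|U| #|U| A.
      apply: bh_sum => i iU.
      have H := bhM (bhc i) (bhM (bhM (bhE k) (bhZ m)) (bh_prod (A:=U:\i) (fun j _ => bhT j))).
      refine (bh_eq H _ _); have := cU i iU; lia.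
    have H1 := bh_eq (bhM (bhM (bhc k) (bhZ m)) bhW) (erefl #|U|) (erefl #|U|.+1).
    have H := bhM (bhN (bhD H1 (bhM (bhZ k) bhA)))
        (bh_prod (A:=D k) (fun j _ => bhZ j)).
    refine (bh_eq H _ _); rewrite ?cardD; lia.
  - have H := bhM (bhM (bhM (bhc m) (bhE k)) bhW) (bh_prod (A:=D m) (fun j _ => bhE j)).
    refine (bh_eq H _ _); rewrite ?cardD; lia.
split.
- rewrite hnum hden Pid; ring.
- rewrite !mevalM mevalN mevalD !mevalM hZ mul0r addr0 mulNr oppr_eq0.
  apply: mulf_neq0; [apply: mulf_neq0; [apply: mulf_neq0; [exact: evalc | ] | ] | ].
  + by apply: Zne _ _ _ pt hZ _; rewrite eq_sym.
  + rewrite /W rmorph_prod; apply/prodf_neq0 => j; rewrite !in_setD1 in_setT andbT => /andP [jm jk].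
    rewrite /T rmorphM mulf_neq0 //; [exact: Zne _ _ _ pt hZ jk | exact: Ene _ _ _ pt hE jm].
  + rewrite /NZ rmorph_prod; apply/prodf_neq0 => j; rewrite !in_setD1 in_setT andbT => jk.
    exact: Zne _ _ _ pt hZ jk.
- rewrite !mevalM.
  apply: mulf_neq0; [apply: mulf_neq0; [apply: mulf_neq0; [exact: evalc | ] | ] | ].
  + exact: Ene _ _ _ pt hE km.
  + rewrite /W rmorph_prod; apply/prodf_neq0 => j; rewrite !in_setD1 in_setT andbT => /andP [jm jk].
    rewrite /T rmorphM mulf_neq0 //; [exact: Zne _ _ _ pt hZ jk | exact: Ene _ _ _ pt hE jm].
  + rewrite /DE rmorph_prod; apply/prodf_neq0 => j; rewrite !in_setD1 in_setT andbT => jm.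
    exact: Ene _ _ _ pt hE jm.
Qed.


Lemma pairZ v k : P1xP1_point v -> (JNR_curve lam gam).@[v] = 0 -> (Z k).@[v] = 0 ->
  exists m, k != m /\ (E m).@[v] = 0.
Proof.
move=> pt Pv hk.
have hT : (T k).@[v] = 0 by rewrite /T mevalM hk mul0r.
move: Pv; rewrite (evalP_zero v k hT) => /eqP; rewrite mulf_eq0 (negbTE (evalc v k)) /=.
move=> /prodf_eq0 [j jD]; rewrite /T mevalM mulf_eq0 => /orP [/eqP hj|/eqP hj].
  have jk : j != k by move: jD; rewrite in_setD1 => /andP [].
  by have := Zne v k j pt hk jk; rewrite hj eqxx.
exists j; split => //; move: jD; rewrite in_setD1 => /andP [h _]; by rewrite eq_sym.
Qed.

Lemma pairE v m : P1xP1_point v -> (JNR_curve lam gam).@[v] = 0 -> (E m).@[v] = 0 ->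
  exists k, k != m /\ (Z k).@[v] = 0.
Proof.
move=> pt Pv hm.
have hT : (T m).@[v] = 0 by rewrite /T mevalM hm mulr0.
move: Pv; rewrite (evalP_zero v m hT) => /eqP; rewrite mulf_eq0 (negbTE (evalc v m)) /=.
move=> /prodf_eq0 [j jD]; rewrite /T mevalM mulf_eq0 => /orP [/eqP hj|/eqP hj].
  exists j; split => //; by move: jD; rewrite in_setD1 => /andP [h _].
have jm : j != m by move: jD; rewrite in_setD1 => /andP [].
by have := Ene v m j pt hm jm; rewrite hj eqxx.
Qed.

Lemma main_sec : restriction_nonvanishing N (JNR_curve lam gam) (s_num gam) (s_den gam).
Proof.
move=> v pt Pv.
have key : (exists k m, [/\ k != m, (Z k).@[v] = 0 & (E m).@[v] = 0]) \/
           ((s_num gam).@[v] != 0 /\ (s_den gam).@[v] != 0).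
  case: (boolP ((s_num gam).@[v] == 0)) => hn.
    left; move: hn; rewrite /s_num rmorph_prod => /prodf_eq0 [k _ /eqP hk].
    have [m [km hm]] := pairZ v k pt Pv hk.
    by exists k, m.
  case: (boolP ((s_den gam).@[v] == 0)) => hd; last by right.
  left; move: hd; rewrite /s_den rmorph_prod => /prodf_eq0 [m _ /eqP hm].
  have [k [km hk]] := pairE v m pt Pv hm.
  by exists k, m.
case: key => [[k [m [km hk hm]]]|[hn hd]]; first exact: (construct v k m pt km hk hm).
exists (s_num gam), (s_den gam), 0, N.+1, 0, 0, N.+1.
split.
  split => //.
  - have H := bh_prod (A:=[set: 'I_N.+1]) (fun j _ => bhZ j).
    rewrite cardsT card_ord in H.
    have e : s_num gam = \prod_(i in [set: 'I_N.+1]) Z i.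
      by rewrite /s_num; apply: eq_bigl => i; rewrite in_setT.
    rewrite e; exact (bh_eq H (mul0n _) (mul1n _)).
  - have H := bh_prod (A:=[set: 'I_N.+1]) (fun j _ => bhE j).
    rewrite cardsT card_ord in H.
    have e : s_den gam = \prod_(i in [set: 'I_N.+1]) E i.
      by rewrite /s_den; apply: eq_bigl => i; rewrite in_setT.
    rewrite e; exact (bh_eq H (mul1n _) (mul0n _)).
split => //.
by rewrite mulrC subrr mul0r.
Qed.

End Main.

Theorem mainTheorem1 (R : realType) (N : nat) (lam : 'I_N.+1 -> R)
    (gam : 'I_N.+1 -> R[i]) :
  (1 <= N)%N ->
  (forall i, 0 < lam i) ->
  injective gam ->
  restriction_nonvanishing N (JNR_curve lam gam) (s_num gam) (s_den gam).
Proof.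
move=> _ lampos ginj; exact: main_sec.
Qed.
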